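(* Let $(X,Y,E)$ be a bipartite graph in which every vertex has degree at most $d_{max}$. For non-negative integers $k\le|X|$ and $l\le|Y|$ let $s=\frac{kl|E|}{|X||Y|}$. Then for every real $0\le\gamma<1/2$, $$\Pr_{S\sim\binom{X}{k},\,T\sim\binom{Y}{l}}\big[|E(S,T)|\notin[(1-\gamma)s,(1+\gamma)s]\big]\le4\exp\left(-\frac{\gamma^2s}{54d_{max}}\right).$$
   Context: $S$ and $T$ are sampled independently and uniformly among subsets of $X$ of size $k$ and subsets of $Y$ of size $l$, respectively. $E(S,T)$ denotes the set of edges with one endpoint in $S$ and the other in $T$. *)

(* Defs.v *)
From HB Require Import structures.
From mathcomp Require Import all_boot all_order all_algebra.
From mathcomp Require Import all_classical all_reals all_analysis.
Set Implicit Arguments. Unset Strict Implicit. Unset Printing Implicit Defensive.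
Import Order.TTheory GRing.Theory Num.Theory.
Local Open Scope ring_scope.

Definition edges_between (X Y : finType) (E : {set X * Y})
  (S : {set X}) (T : {set Y}) : {set X * Y} := E :&: finset.setX S T.

Definition degX (X Y : finType) (E : {set X * Y}) (x : X) : nat :=
  #|[set y : Y | (x, y) \in E]|.
Definition degY (X Y : finType) (E : {set X * Y}) (y : Y) : nat :=
  #|[set x : X | (x, y) \in E]|.

Definition ksubsets (T : finType) (k : nat) : {set {set T}} :=
  [set S : {set T} | #|S| == k].

Definition prob_ST (R : realType) (X Y : finType) (k l : nat)
  (B : {set X} -> {set Y} -> bool) : R :=
  (#|[set p : {set X} * {set Y} |
        [&& p.1 \in ksubsets X k, p.2 \in ksubsets Y l & B p.1 p.2]]|)%:R
  / (#|ksubsets X k| * #|ksubsets Y l|)%:R.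

(* Main.v *)
Require Import Defs.
From HB Require Import structures.
From mathcomp Require Import all_boot all_order all_algebra.
From mathcomp Require Import all_classical all_reals all_analysis.
From mathcomp Require Import zify ring lra.
Import Order.TTheory GRing.Theory Num.Theory.
Set Implicit Arguments. Unset Strict Implicit.

Lemma binom_ineq n k a : (a <= k)%N -> (k <= n)%N ->
  ('C(n - a, k - a) * n ^ a <= 'C(n, k) * k ^ a)%N.
Proof.
move=> hak hkn; elim: a hak => [|a IH] hak.
  by rewrite !subn0 !expn0.
have IH' := IH (ltnW hak).
have e := mul_bin_diag (n - a) (k - a).-1.
have e1 : (n - a).-1 = n - a.+1 by lia.
have e2 : (k - a).-1.+1 = k - a by lia.
rewrite e1 e2 in e.
set C := 'C(n - a, k - a) in IH' e *.
set C' := 'C(n - a.+1, (k - a).-1) in e.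
have e3 : k - a.+1 = (k - a).-1 by lia.
rewrite e3 -/C' !expnS.
have hpos : (0 < n - a)%N by lia.
suff : (C' * (n * n ^ a) * (n - a) <= 'C(n, k) * (k * k ^ a) * (n - a))%N.
  by rewrite leq_pmul2r.
have : (C * n ^ a * (n * (k - a)) <= 'C(n, k) * k ^ a * (n * (k - a)))%N.
  by rewrite leq_mul2r IH' orbT.
move=> h1.
have h2 : (n * (k - a) <= k * (n - a))%N by nia.
have h3 : ('C(n, k) * k ^ a * (n * (k - a)) <= 'C(n, k) * k ^ a * (k * (n - a)))%N
  by rewrite leq_mul2l h2 orbT.
have h4 : (C' * (n * n ^ a) * (n - a) = C * n ^ a * (n * (k - a)))%N.
  transitivity ((n - a) * C' * (n * n ^ a))%N; first ring.
  rewrite e; ring.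
rewrite h4; apply: (leq_trans h1); apply: (leq_trans h3).
by rewrite !mulnA [(_ * k)%N]mulnAC.
Qed.

Lemma card_ksub (T : finType) k : #|ksubsets T k| = 'C(#|T|, k).
Proof. exact: card_draws. Qed.

Lemma count_sup (T : finType) (A : {set T}) k : (k <= #|T|)%N ->
  (#|[set S in ksubsets T k | A \subset S]| * #|T| ^ #|A| <= 'C(#|T|, k) * k ^ #|A|)%N.
Proof.
move=> hkn.
have [hak|hak] := leqP #|A| k; last first.
  suff -> : [set S in ksubsets T k | A \subset S] = finset.set0 by rewrite cards0.
  apply/setP => S; rewrite !inE.
  apply/negP => /andP[/eqP hS hAS].
  by have := subset_leq_card hAS; rewrite hS leqNgt hak.
have BI := @binom_ineq _ _ _ hak hkn.
apply: (leq_trans _ BI).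
rewrite leq_mul2r; apply/orP; right.
set D := [set B : {set T} | B \subset ~: A & #|B| == k - #|A|].
have hD : #|D| = 'C(#|T| - #|A|, k - #|A|).
  by rewrite cards_draws; congr 'C(_, _); have := cardsC A; lia.
rewrite -hD; apply: (leq_trans _ (leq_imset_card (fun B => A :|: B) D)).
apply: subset_leq_card; apply/fintype.subsetP => S; rewrite !inE.
move=> /andP[/eqP hS hAS]; apply/imsetP; exists (S :\: A).
  by rewrite inE subsetDr cardsDS // hS eqxx.
apply/setP => x; rewrite !inE; case: (boolP (x \in A)) => hx //=.
by rewrite (fintype.subsetP hAS).
Qed.

Lemma count_disj (T : finType) (A : {set T}) k : (k <= #|T|)%N ->
  (#|[set S in ksubsets T k | A \subset ~: S]| * #|T| ^ #|A|
     <= 'C(#|T|, k) * (#|T| - k) ^ #|A|)%N.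
Proof.
move=> hkn.
have -> : [set S in ksubsets T k | A \subset ~: S] =
          [set S : {set T} | S \subset ~: A & #|S| == k].
  by apply/setP => S; rewrite !inE finset.subsetC andbC.
rewrite cards_draws.
have hc : #|~: A| = #|T| - #|A| by have := cardsC A; lia.
rewrite hc.
have [hak|hak] := leqP #|A| (#|T| - k); last first.
  by rewrite bin_small ?mul0n //; have := cardsC A; lia.
rewrite -(bin_sub hkn) -(bin_sub (_ : k <= #|T| - #|A|)%N); last by lia.
have -> : (#|T| - #|A| - k = (#|T| - k) - #|A|)%N by lia.
apply: binom_ineq => //; lia.
Qed.

Local Open Scope ring_scope.

Lemma sum_ind (R : realType) (T : finType) (G : {set T}) (P : pred T) :
  \sum_(S in G) (P S)%:R = (#|[set S in G | P S]|)%:R :> R.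
Proof.
rewrite -sumr_const /= [RHS]big_mkcond [LHS]big_mkcond /=.
by apply: eq_bigr => S _; rewrite !inE; case: (S \in G); case: (P S).
Qed.

Lemma prod_ind (R : realType) (T : finType) (J B : {set T}) (a b : T -> R) :
  \prod_i (if i \in J then b i * (i \in B)%:R else a i) =
  (J \subset B)%:R * \prod_i (if i \in J then b i else a i).
Proof.
case: (boolP (J \subset B)) => hJ.
  rewrite mul1r; apply: eq_bigr => i _; case: ifP => // hi.
  by rewrite (fintype.subsetP hJ i hi) mulr1.
rewrite mul0r; move/fintype.subsetPn: hJ => [i hi hni].
by rewrite (bigD1 i) //= hi (negbTE hni) mulr0 mul0r.
Qed.

Lemma expand_bound (R : realType) (T : finType) (G : {set {set T}})
  (g : {set T} -> {set T}) (a b : T -> R) (r : R)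
  (ha : forall i, 0 <= a i) (hb : forall i, 0 <= b i) (hr : 0 <= r)
  (hc : forall A : {set T},
     (#|[set S in G | A \subset g S]|)%:R <= (#|G|)%:R * r ^+ #|A|) :
  \sum_(S in G) \prod_i (b i * (i \in g S)%:R + a i)
    <= (#|G|)%:R * \prod_i (r * b i + a i).
Proof.
have E : forall S, \prod_i (b i * (i \in g S)%:R + a i) =
  \sum_(J : {set T}) (J \subset g S)%:R * \prod_i (if i \in J then b i else a i).
  move=> S; rewrite (@bigA_distr R 0 1 *%R +%R).
  by apply: eq_bigr => J _; rewrite prod_ind.
rewrite (eq_bigr _ (fun S _ => E S)) exchange_big /=.
rewrite (@bigA_distr R 0 1 *%R +%R) mulr_sumr; apply: ler_sum => J _.
rewrite -mulr_suml sum_ind.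
have P0 : 0 <= \prod_i (if i \in J then b i else a i).
  by apply: prodr_ge0 => i _; case: ifP.
have -> : \prod_i (if i \in J then r * b i else a i) =
          r ^+ #|J| * \prod_i (if i \in J then b i else a i).
  rewrite -prodr_const [X in _ = X * _]big_mkcond -big_split /=.
  by apply: eq_bigr => i _; case: ifP; rewrite ?mul1r.
rewrite mulrA; apply: ler_wpM2r => //; exact: hc.
Qed.

Section Real.
Variable R : realType.

Lemma exp_up (u : R) : 0 <= u -> u <= 1 / 2 -> expR u <= 1 + u + 2 * u ^+ 2.
Proof.
move=> h0 h1.
have hp : 0 < 1 - u by lra.
rewrite -(ler_pM2r hp).
have e1 : expR u * (1 - u) <= 1.
  have := expR_ge1Dx (- u); rewrite -(ler_pM2l (expR_gt0 u)).
  by rewrite -expRD subrr expR0.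
apply: (le_trans e1); nra.
Qed.

Lemma exp_low (u : R) : 0 <= u -> expR (- u) <= 1 - u + u ^+ 2.
Proof.
move=> h0.
have hp : 0 < 1 + u by lra.
rewrite -(ler_pM2r hp).
have e1 : expR (- u) * (1 + u) <= 1.
  have := expR_ge1Dx u; rewrite -(ler_pM2l (expR_gt0 (- u))).
  by rewrite -expRD addNr expR0 mulrC.
apply: (le_trans e1); nra.
Qed.

End Real.

Lemma nat_to_real (R : realType) (x n C m a : nat) :
  (x * n ^ a <= C * m ^ a)%N -> (n = 0%N -> a = 0%N) ->
  (x%:R : R) <= C%:R * (m%:R / n%:R) ^+ a.
Proof.
move=> h hn.
have [n0|npos] := posnP n.
  by move: h; rewrite (hn n0) !expn0 !muln1 expr0 mulr1 ler_nat.
have hp : (0 : R) < (n%:R) ^+ a by rewrite exprn_gt0 // ltr0n.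
rewrite expr_div_n mulrA ler_pdivlMr // -!natrX -!natrM ler_nat //.
Qed.

Lemma cardA_le (T : finType) (A : {set T}) : #|T| = 0%N -> #|A| = 0%N.
Proof. by move=> h; have := max_card (mem A); rewrite h; case: #|A|. Qed.

Lemma mgf_up (R : realType) (T : finType) k (hk : (k <= #|T|)%N) (c : T -> R)
  (hc : forall i, 0 <= c i) :
  \sum_(S in ksubsets T k) \prod_(i in S) (1 + c i)
   <= ('C(#|T|, k))%:R * \prod_i (1 + (k%:R / (#|T|)%:R) * c i).
Proof.
have E : forall S : {set T}, \prod_(i in S) (1 + c i) =
   \prod_i (c i * (i \in (fun S => S) S)%:R + 1).
  move=> S; rewrite big_mkcond /=; apply: eq_bigr => i _.
  by case: (i \in S); rewrite /= ?mulr1 ?mulr0; lra.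
rewrite (eq_bigr _ (fun S _ => E S)) -card_ksub.
under [X in _ <= _ * X]eq_bigr => i _ do rewrite addrC.
apply: expand_bound => // A; rewrite card_ksub; apply: nat_to_real; first exact: count_sup.
exact: cardA_le.
Qed.

Lemma mgf_low (R : realType) (T : finType) k (hk : (k <= #|T|)%N) (c : T -> R)
  (hc0 : forall i, 0 <= c i) (hc1 : forall i, c i <= 1) :
  \sum_(S in ksubsets T k) \prod_(i in S) (1 - c i)
   <= ('C(#|T|, k))%:R * \prod_i (1 - (k%:R / (#|T|)%:R) * c i).
Proof.
have E : forall S : {set T}, \prod_(i in S) (1 - c i) =
   \prod_i (c i * (i \in (fun S => ~: S) S)%:R + (1 - c i)).
  move=> S; rewrite big_mkcond /=; apply: eq_bigr => i _; rewrite inE.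
  by case: (i \in S); rewrite /= ?mulr1 ?mulr0; lra.
have hp1 : k%:R / (#|T|)%:R <= 1 :> R.
  have [n0|npos] := posnP #|T|; first by rewrite n0 invr0 mulr0 ler01.
  by rewrite ler_pdivrMr ?ltr0n // mul1r ler_nat.
have E2 : forall i, 1 - (k%:R / (#|T|)%:R) * c i =
   (1 - k%:R / (#|T|)%:R) * c i + (1 - c i) :> R.
  by move=> i; lra.
rewrite (eq_bigr _ (fun S _ => E S)) -card_ksub (eq_bigr _ (fun i _ => E2 i)).
apply: expand_bound => //; first (by move=> i; rewrite subr_ge0); first (by rewrite subr_ge0).
move=> A; rewrite card_ksub.
have [n0|npos] := posnP #|T|.
  rewrite (@cardA_le _ A n0) expr0 mulr1 ler_nat.
  rewrite -card_ksub; apply: subset_leq_card; apply/fintype.subsetP => S.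
  by rewrite !inE => /andP[h _].
have -> : 1 - k%:R / (#|T|)%:R = (#|T| - k)%:R / (#|T|)%:R :> R.
  by rewrite natrB // mulrBl divff // pnatr_eq0 -lt0n.
apply: nat_to_real; first exact: count_disj.
exact: cardA_le.
Qed.

Lemma markov_count (R : realType) (T : finType) (G : {set T}) (P : pred T)
  (f : T -> R) (x : R) : (forall S, 0 <= f S) ->
  (forall S, S \in G -> P S -> x <= f S) ->
  (#|[set S in G | P S]|)%:R * x <= \sum_(S in G) f S.
Proof.
move=> hf hx; rewrite -sum_ind mulr_suml; apply: ler_sum => S hS.
by case: (boolP (P S)) => hP; rewrite ?mul1r ?mul0r //; apply: hx.
Qed.

Lemma upper_tail (R : realType) (T : finType) k (hk : (k <= #|T|)%N)
  (w : T -> R) (D : R) (hD : 0 < D) (hw0 : forall i, 0 <= w i)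
  (hwD : forall i, w i <= D) (mu del a : R)
  (hmu : k%:R / (#|T|)%:R * \sum_i w i <= mu) (hd0 : 0 <= del) (hd1 : del <= 1)
  (ha : (1 + del) * mu <= a) :
  (#|[set S in ksubsets T k | a <= \sum_(i in S) w i]|)%:R
    <= ('C(#|T|, k))%:R * expR (- (del ^+ 2 * mu / (8 * D))).
Proof.
set p : R := (k%:R / (#|T|)%:R) in hmu.
have hp : 0 <= p by rewrite divr_ge0 ?ler0n.
set t := del / 4.
set lam := t / D.
have ht0 : 0 <= t by rewrite /t; lra.
have hlam : 0 <= lam by rewrite divr_ge0 // ltW.
set c := fun i => expR (lam * w i) - 1.
have hc0 : forall i, 0 <= c i.
  move=> i; rewrite /c subr_ge0 -expR0 ler_expR; exact: mulr_ge0.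
have hM' : (#|[set S in ksubsets T k | a <= \sum_(i in S) w i]|)%:R * expR (lam * a)
   <= \sum_(S in ksubsets T k) expR (lam * \sum_(i in S) w i).
  apply: markov_count => [S|S _ hS]; first exact: expR_ge0.
  rewrite ler_expR; exact: ler_wpM2l.
have E1 : forall S : {set T}, expR (lam * \sum_(i in S) w i) = \prod_(i in S) (1 + c i).
  move=> S; rewrite mulr_sumr expR_sum; apply: eq_bigr => i _; rewrite /c; lra.
rewrite (eq_bigr _ (fun S _ => E1 S)) in hM'.
have hU := le_trans hM' (@mgf_up _ _ _ hk _ hc0).
have hci : forall i, c i <= (w i / D) * (t + 2 * t ^+ 2).
  move=> i; rewrite /c; set v := w i / D.
  have hv0 : 0 <= v by rewrite divr_ge0 // ltW.
  have hv1 : v <= 1 by rewrite ler_pdivrMr // mul1r.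
  have -> : lam * w i = t * v by rewrite /lam /v mulrA mulrAC.

  have ht1 : t <= 1 / 4 by rewrite /t; lra.
  have := @exp_up R (t * v) (mulr_ge0 ht0 hv0) ltac:(nra).
  have hv2 : v ^+ 2 <= v by nra.
  have ht2 : 0 <= t ^+ 2 by rewrite sqr_ge0.
  have h1 : (t * v) ^+ 2 <= v * t ^+ 2.
    by rewrite exprMn mulrC; apply: ler_wpM2r.
  nra.
have hP : \prod_i (1 + p * c i) <= expR ((t + 2 * t ^+ 2) / D * mu).
  apply: (@le_trans _ _ (\prod_i expR (p * c i))).
    apply: ler_prod => i _; apply/andP; split; last exact: expR_ge1Dx.
    by rewrite addr_ge0 // mulr_ge0.
  rewrite -expR_sum ler_expR.
  apply: (@le_trans _ _ (\sum_i ((t + 2 * t ^+ 2) / D * p) * w i)).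
    apply: ler_sum => i _.
    have := ler_wpM2l hp (hci i).
    have -> : (t + 2 * t ^+ 2) / D * p * w i = p * (w i / D * (t + 2 * t ^+ 2)).
      by ring.
    done.
  rewrite -mulr_sumr -mulrA; apply: ler_wpM2l => //.
  apply: divr_ge0; last exact: ltW.
  by have := sqr_ge0 t; lra.
have hC : 0 <= ('C(#|T|, k))%:R :> R by rewrite ler0n.
have hU2 := le_trans hU (ler_wpM2l hC hP).
have hea : 0 < expR (lam * a) := expR_gt0 _.
rewrite -(ler_pM2r hea); apply: (le_trans hU2).
rewrite -[X in _ <= X]mulrA; apply: ler_wpM2l => //; rewrite -expRD ler_expR.
have : lam * ((1 + del) * mu) <= lam * a by exact: ler_wpM2l.
have -> : lam * ((1 + del) * mu) = t * (1 + del) / D * mu.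
  by rewrite /lam; ring.
have e : (t + 2 * t ^+ 2) / D * mu = - (del ^+ 2 * mu / (8 * D)) + t * (1 + del) / D * mu.
  rewrite /t; field; lra.
rewrite e; lra.
Qed.

Lemma lower_tail (R : realType) (T : finType) k (hk : (k <= #|T|)%N)
  (w : T -> R) (D : R) (hD : 0 < D) (hw0 : forall i, 0 <= w i)
  (hwD : forall i, w i <= D) (mu del a : R)
  (hmu : mu <= k%:R / (#|T|)%:R * \sum_i w i) (hd0 : 0 <= del) (hd1 : del <= 1)
  (ha : a <= (1 - del) * mu) :
  (#|[set S in ksubsets T k | \sum_(i in S) w i <= a]|)%:R
    <= ('C(#|T|, k))%:R * expR (- (del ^+ 2 * mu / (4 * D))).
Proof.
set p : R := (k%:R / (#|T|)%:R) in hmu.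
have hp : 0 <= p by rewrite divr_ge0 ?ler0n.
have hp1 : p <= 1.
  rewrite /p; have [n0|npos] := posnP #|T|; first by rewrite n0 invr0 mulr0 ler01.
  by rewrite ler_pdivrMr ?ltr0n // mul1r ler_nat.
set t := del / 2.
set lam := t / D.
have ht0 : 0 <= t by rewrite /t; lra.
have ht1 : t <= 1 / 2 by rewrite /t; lra.
have hlam : 0 <= lam by rewrite divr_ge0 // ltW.
set c := fun i => 1 - expR (- (lam * w i)).
have hc0 : forall i, 0 <= c i.
  move=> i; rewrite /c subr_ge0 -expR0 ler_expR oppr_le0; exact: mulr_ge0.
have hc1 : forall i, c i <= 1.
  by move=> i; rewrite /c; have := expR_ge0 (- (lam * w i)); lra.
have hM' : (#|[set S in ksubsets T k | \sum_(i in S) w i <= a]|)%:R * expR (- (lam * a))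
   <= \sum_(S in ksubsets T k) expR (- (lam * \sum_(i in S) w i)).
  apply: markov_count => [S|S _ hS]; first exact: expR_ge0.
  rewrite ler_expR lerN2; exact: ler_wpM2l.
have E1 : forall S : {set T}, expR (- (lam * \sum_(i in S) w i)) = \prod_(i in S) (1 - c i).
  move=> S; rewrite mulr_sumr -sumrN expR_sum; apply: eq_bigr => i _; rewrite /c; lra.
rewrite (eq_bigr _ (fun S _ => E1 S)) in hM'.
have hU := le_trans hM' (@mgf_low _ _ _ hk _ hc0 hc1).
have hci : forall i, (w i / D) * (t - t ^+ 2) <= c i.
  move=> i; rewrite /c; set v := w i / D.
  have hv0 : 0 <= v by rewrite divr_ge0 // ltW.
  have hv1 : v <= 1 by rewrite ler_pdivrMr // mul1r.
  have -> : lam * w i = t * v by rewrite /lam /v; ring.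
  have := @exp_low R (t * v) (mulr_ge0 ht0 hv0).
  have hv2 : v ^+ 2 <= v by nra.
  have ht2 : 0 <= t ^+ 2 by rewrite sqr_ge0.
  have h1 : (t * v) ^+ 2 <= v * t ^+ 2.
    by rewrite exprMn mulrC; apply: ler_wpM2r.
  nra.
have hP : \prod_i (1 - p * c i) <= expR (- ((t - t ^+ 2) / D * mu)).
  apply: (@le_trans _ _ (\prod_i expR (- (p * c i)))).
    apply: ler_prod => i _; apply/andP; split; last exact: expR_ge1Dx.
    rewrite subr_ge0; have := hc1 i; have := hc0 i; nra.
  rewrite -expR_sum ler_expR sumrN lerN2.
  apply: (@le_trans _ _ (\sum_i ((t - t ^+ 2) / D * p) * w i)); last first.
    apply: ler_sum => i _.
    have := ler_wpM2l hp (hci i).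
    have -> : (t - t ^+ 2) / D * p * w i = p * (w i / D * (t - t ^+ 2)).
      by ring.
    done.
  rewrite -mulr_sumr -[X in _ <= X]mulrA; apply: ler_wpM2l => //.
  apply: divr_ge0; last exact: ltW.
  nra.
have hC : 0 <= ('C(#|T|, k))%:R :> R by rewrite ler0n.
have hU2 := le_trans hU (ler_wpM2l hC hP).
have hea : 0 < expR (- (lam * a)) := expR_gt0 _.
rewrite -(ler_pM2r hea); apply: (le_trans hU2).
rewrite -[X in _ <= X]mulrA; apply: ler_wpM2l => //; rewrite -expRD ler_expR.
have : lam * a <= lam * ((1 - del) * mu) by exact: ler_wpM2l.
have -> : lam * ((1 - del) * mu) = t * (1 - del) / D * mu.
  by rewrite /lam; ring.
have e : - ((t - t ^+ 2) / D * mu) = - (del ^+ 2 * mu / (4 * D)) - t * (1 - del) / D * mu.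
  rewrite /t; field; lra.
rewrite e; lra.
Qed.

Lemma sum_indT (R : realType) (T : finType) (P : pred T) :
  \sum_i (P i)%:R = (#|[set i | P i]|)%:R :> R.
Proof.
rewrite -sumr_const /= [RHS]big_mkcond /=.
by apply: eq_bigr => i _; rewrite !inE; case: (P i).
Qed.

Lemma pair_count (R : realType) (X Y : finType) (A : {set {set X}}) (B : {set {set Y}})
  (P : {set X} -> {set Y} -> bool) :
  (#|[set pr : {set X} * {set Y} | [&& pr.1 \in A, pr.2 \in B & P pr.1 pr.2]]|)%:R
  = \sum_(S in A) \sum_(T in B) (P S T)%:R :> R.
Proof.
rewrite -sum_indT -(pair_big xpredT xpredT (fun S T => ([&& S \in A, T \in B & P S T])%:R)) /=.
rewrite [RHS]big_mkcond /=; apply: eq_bigr => S _.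
case: (S \in A) => /=; last by rewrite big1.
rewrite [RHS]big_mkcond; apply: eq_bigr => T _; by case: (T \in B).
Qed.

Section Graph.
Variables (R : realType) (X Y : finType) (E : {set X * Y}).

Definition ind (x : X) (y : Y) : R := ((x, y) \in E)%:R.
Definition wT (T : {set Y}) (x : X) : R := \sum_(y in T) ind x y.

Lemma degX_sum x : (degX E x)%:R = \sum_y ind x y.
Proof. by rewrite /ind sum_indT. Qed.

Lemma degY_sum y : (degY E y)%:R = \sum_x ind x y.
Proof. by rewrite /ind sum_indT. Qed.

Lemma cardE_sum : (#|E|)%:R = \sum_x \sum_y ind x y.
Proof.
rewrite /ind (pair_big xpredT xpredT (fun x y => ((x, y) \in E)%:R)) /= sum_indT.
by congr (_%:R); apply: eq_card => pr; rewrite inE; case: pr.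
Qed.

Lemma card_eb S T : (#|edges_between E S T|)%:R = \sum_(x in S) wT T x.
Proof.
rewrite /edges_between.
have -> : #|E :&: finset.setX S T| = #|[set pr | pr \in E :&: finset.setX S T]|.
  by apply: eq_card => pr; rewrite inE.
rewrite -sum_indT.
transitivity (\sum_x \sum_y ((x, y) \in E :&: finset.setX S T)%:R : R).
  rewrite (pair_big xpredT xpredT
   (fun x y => ((x, y) \in E :&: finset.setX S T)%:R)) /=.
  by apply: eq_bigr => -[x y].
rewrite [RHS]big_mkcond; apply: eq_bigr => x _ /=; rewrite /wT.
case: (boolP (x \in S)) => hx.
  rewrite [RHS]big_mkcond; apply: eq_bigr => y _ /=; rewrite !inE hx /ind.
  by case: (y \in T); rewrite ?andbT ?andbF.
by rewrite big1 // => y _; rewrite !inE (negbTE hx) andbF.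
Qed.

Lemma wT_sum T : \sum_x wT T x = \sum_(y in T) (degY E y)%:R.
Proof.
rewrite /wT exchange_big /=; apply: eq_bigr => y _; by rewrite degY_sum.
Qed.

Lemma wT_ge0 T x : 0 <= wT T x.
Proof. by apply: sumr_ge0 => y _; rewrite /ind ler0n. Qed.

Lemma wT_le T x : wT T x <= (degX E x)%:R.
Proof.
rewrite degX_sum /wT [X in X <= _]big_mkcond /=; apply: ler_sum => y _.
by case: (y \in T); rewrite // /ind ler0n.
Qed.

End Graph.
Arguments ind {R X Y} E x y.
Arguments wT {R X Y} E T x.
Arguments degX_sum {R X Y} E x.
Arguments degY_sum {R X Y} E y.
Arguments cardE_sum {R X Y} E.
Arguments card_eb {R X Y} E S T.
Arguments wT_sum {R X Y} E T.
Arguments wT_ge0 {R X Y} E T x.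
Arguments wT_le {R X Y} E T x.

Lemma exp_cmp (R : realType) (x y c1 c2 D : R) : 0 < D -> 0 < c1 -> 0 < c2 ->
  x / c1 <= y / c2 -> expR (- (y / (c2 * D))) <= expR (- (x / (c1 * D))).
Proof.
move=> hD h1 h2 h; rewrite ler_expR lerN2 !invfM !mulrA.
by rewrite ler_pM2r // invr_gt0.
Qed.

Lemma count_le (R : realType) (T : finType) (G : {set T}) (P : pred T) :
  \sum_(S in G) (P S)%:R <= (#|G|)%:R :> R.
Proof.
rewrite -sumr_const; apply: ler_sum => S _; by case: (P S).
Qed.

Unset Implicit Arguments.
Set Strict Implicit.

Theorem lemma2p9 (R : realType) (X Y : finType) (E : {set X * Y}) (dmax : nat)
  (hdX : forall x : X, (degX E x <= dmax)%N)
  (hdY : forall y : Y, (degY E y <= dmax)%N)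
  (k l : nat) (hk : (k <= #|X|)%N) (hl : (l <= #|Y|)%N)
  (gamma : R) (hg0 : 0 <= gamma) (hg1 : gamma < 1 / 2) :
  let s : R := (k * l * #|E|)%:R / (#|X| * #|Y|)%:R in
  prob_ST R k l (fun S T =>
      ~~ (((1 - gamma) * s <= (#|edges_between E S T|)%:R)
          && ((#|edges_between E S T|)%:R <= (1 + gamma) * s)))
  <= 4 * expR (- (gamma ^+ 2 * s / (54 * dmax%:R))).
Proof.
cbv zeta.
set s : R := (k * l * #|E|)%:R / (#|X| * #|Y|)%:R.
set D : R := dmax%:R.
set e := expR (- (gamma ^+ 2 * s / (54 * D))).
have he0 : 0 <= e := expR_ge0 _.
have hCX : (0 < 'C(#|X|, k))%N by rewrite bin_gt0.
have hCY : (0 < 'C(#|Y|, l))%N by rewrite bin_gt0.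
match goal with |- context [prob_ST _ _ _ ?B] => set BB := B end.
rewrite /prob_ST pair_count !card_ksub /BB /=.
rewrite ler_pdivrMr; last by rewrite ltr0n muln_gt0 hCX hCY.
have [d0|dpos] := posnP dmax.
  have hE : E = finset.set0.
    apply/setP => -[x y]; rewrite !inE; apply/negP => hxy.
    have := hdX x; rewrite d0 leqn0 /degX cards_eq0 => /eqP h.
    have : y \in [set y0 | (x, y0) \in E] by rewrite inE.
    by rewrite h inE.
  rewrite big1; first by rewrite mulr_ge0 // mulr_ge0 //; lra.
  move=> S _; rewrite big1 // => T _.
  have -> : #|edges_between E S T| = 0%N.
    by rewrite /edges_between hE finset.set0I cards0.
  by rewrite /s hE cards0 muln0 mul0r !mulr0 lexx.
have hD : 0 < D by rewrite ltr0n.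
pose p : R := k%:R / (#|X|)%:R.
pose q : R := l%:R / (#|Y|)%:R.
pose Et : R := (#|E|)%:R.
have hs : s = p * q * Et by rewrite /s /p /q /Et !natrM invfM; ring.
have hp0 : 0 <= p by rewrite divr_ge0 ?ler0n.
have hq0 : 0 <= q by rewrite divr_ge0 ?ler0n.
have hp1 : p <= 1.
  rewrite /p; have [n0|npos] := posnP #|X|; first by rewrite n0 invr0 mulr0 ler01.
  by rewrite ler_pdivrMr ?ltr0n // mul1r ler_nat.
have hE0 : 0 <= Et by rewrite ler0n.
have hqE0 : 0 <= q * Et by rewrite mulr_ge0.
have hsq : s <= q * Et.
  rewrite hs -mulrA; have := ler_wpM2r hqE0 hp1; rewrite mul1r.
  done.
have hs0 : 0 <= s by rewrite hs !mulr_ge0.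
set d1 := 2 * gamma / 5.
pose M := fun T : {set Y} => \sum_(y in T) (degY E y)%:R : R.
have hSumY : \sum_y (degY E y)%:R = Et :> R.
  rewrite /Et (@cardE_sum R _ _ E) exchange_big /=.
  by apply: eq_bigr => y _; rewrite degY_sum.
have hwD : forall T x, wT E T x <= D.
  by move=> T x; apply: (le_trans (wT_le _ _ _)); rewrite ler_nat.
have hyD : forall y, (degY E y)%:R <= D :> R by move=> y; rewrite ler_nat.
have g2 : 0 <= gamma ^+ 2 * s by rewrite mulr_ge0 // sqr_ge0.
have g3 : 0 <= gamma * (gamma ^+ 2 * s) by rewrite mulr_ge0.
have g4 : 0 <= gamma * s * (1 / 2 - gamma).
  by rewrite !mulr_ge0 // subr_ge0 ltW.
have hT : forall T, T \in ksubsets Y l ->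
  \sum_(S in ksubsets X k)
    (~~ (((1 - gamma) * s <= (#|edges_between E S T|)%:R)
      && ((#|edges_between E S T|)%:R <= (1 + gamma) * s)))%:R
  <= ('C(#|X|, k))%:R * (((1 + d1) * (q * Et) <= M T)%R%:R
                        + (M T <= (1 - d1) * (q * Et))%R%:R) + 2 * ('C(#|X|, k))%:R * e.
  move=> T hTin.
  have hC0 : 0 <= ('C(#|X|, k))%:R :> R by rewrite ler0n.
  case: (boolP ((1 + d1) * (q * Et) <= M T)) => hU.
    apply: (le_trans (@count_le R _ _ _)); rewrite card_ksub.
    have : 0 <= (M T <= (1 - d1) * (q * Et))%R%:R :> R by rewrite ler0n.
    have : 0 <= 2 * ('C(#|X|, k))%:R * e :> R by rewrite !mulr_ge0.
    rewrite /=; nra.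
  case: (boolP (M T <= (1 - d1) * (q * Et))) => hL.
    apply: (le_trans (@count_le R _ _ _)); rewrite card_ksub.
    have : 0 <= 2 * ('C(#|X|, k))%:R * e :> R by rewrite !mulr_ge0.
    rewrite /=; nra.
  rewrite /= add0r mulr0 add0r.
  rewrite -ltNge in hU; rewrite -ltNge in hL.
  have hMw : \sum_x wT E T x = M T by rewrite wT_sum.
  apply: (@le_trans _ _ (\sum_(S in ksubsets X k)
      (((1 + gamma) * s <= \sum_(x in S) wT E T x)%R%:R
       + (\sum_(x in S) wT E T x <= (1 - gamma) * s)%R%:R))).
    apply: ler_sum => S _; rewrite card_eb.
    set Z := \sum_(x in S) wT E T x.
    have hb : forall b : bool, (b%:R : R) <= 1 by case; rewrite ?ler01.
    have hb0 : forall b : bool, 0 <= (b%:R : R) by case; rewrite ?ler01.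
    case: (boolP ((1 + gamma) * s <= Z)) => hu.
      apply: (le_trans (hb _)); rewrite /= mulr1n; have := hb0 (Z <= (1 - gamma) * s)%R; lra.
    case: (boolP (Z <= (1 - gamma) * s)) => hl'.
      apply: (le_trans (hb _)); rewrite /= mulr1n mulr0n; lra.
    rewrite -ltNge in hu; rewrite -ltNge in hl'.
    have -> : ((1 - gamma) * s <= Z) && (Z <= (1 + gamma) * s).
      by apply/andP; split; apply: ltW.
    by rewrite /= !mulr0n addr0.
  rewrite big_split /= !sum_ind.
  have hup := @upper_tail R X k hk (wT E T) D hD (wT_ge0 E T) (hwD T)
     ((1 + d1) * s) (gamma / 2) ((1 + gamma) * s).
  have hlo := @lower_tail R X k hk (wT E T) D hD (wT_ge0 E T) (hwD T)
     ((1 - d1) * s) (gamma / 2) ((1 - gamma) * s).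
  have hA : (#|[set S in ksubsets X k | (1 + gamma) * s <= \sum_(x in S) wT E T x]|)%:R
            <= ('C(#|X|, k))%:R * e.
    apply: (le_trans (hup _ _ _ _)).
    - rewrite hMw hs -/p; have := ler_wpM2l hp0 (ltW hU); lra.
    - lra.
    - lra.
    - rewrite /d1; lra.
    apply: ler_wpM2l => //; apply: exp_cmp => //; try lra.
    rewrite /d1; nra.
  have hB : (#|[set S in ksubsets X k | \sum_(x in S) wT E T x <= (1 - gamma) * s]|)%:R
            <= ('C(#|X|, k))%:R * e.
    apply: (le_trans (hlo _ _ _ _)).
    - rewrite hMw hs -/p; have := ler_wpM2l hp0 (ltW hL); lra.
    - lra.
    - lra.
    - rewrite /d1; lra.
    apply: ler_wpM2l => //; apply: exp_cmp => //; try lra.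
    rewrite /d1; nra.
  lra.
apply: (@le_trans _ _ (\sum_(T in ksubsets Y l) (('C(#|X|, k))%:R *
   (((1 + d1) * (q * Et) <= M T)%R%:R + (M T <= (1 - d1) * (q * Et))%R%:R)
   + 2 * ('C(#|X|, k))%:R * e))).
  rewrite exchange_big /=; apply: ler_sum => T hTin; exact: hT.
rewrite big_split /= -mulr_sumr big_split /= !sum_ind sumr_const card_ksub.
have hUY := @upper_tail R Y l hl (fun y => (degY E y)%:R) D hD (fun y => ler0n _ _) hyD
     (q * Et) d1 ((1 + d1) * (q * Et)).
have hLY := @lower_tail R Y l hl (fun y => (degY E y)%:R) D hD (fun y => ler0n _ _) hyD
     (q * Et) d1 ((1 - d1) * (q * Et)).
have hA : (#|[set T in ksubsets Y l | (1 + d1) * (q * Et) <= M T]|)%:R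
          <= ('C(#|Y|, l))%:R * e.
  apply: (le_trans (hUY _ _ _ _)).
  - by rewrite hSumY.
  - rewrite /d1; lra.
  - rewrite /d1; lra.
  - done.
  apply: ler_wpM2l; first by rewrite ler0n.
  apply: exp_cmp => //; try lra.
  rewrite /d1; nra.
have hB : (#|[set T in ksubsets Y l | M T <= (1 - d1) * (q * Et)]|)%:R
          <= ('C(#|Y|, l))%:R * e.
  apply: (le_trans (hLY _ _ _ _)).
  - by rewrite hSumY.
  - rewrite /d1; lra.
  - rewrite /d1; lra.
  - done.
  apply: ler_wpM2l; first by rewrite ler0n.
  apply: exp_cmp => //; try lra.
  rewrite /d1; nra.
have hCX0 : 0 <= ('C(#|X|, k))%:R :> R by rewrite ler0n.
have hCY0 : 0 <= ('C(#|Y|, l))%:R :> R by rewrite ler0n.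
rewrite natrM.
have := ler_wpM2l hCX0 (lerD hA hB).
rewrite -/M.
nra.
Qed.
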